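(* Let $S$ be a regular semigroup with set of idempotents $E$, and let $e\in E$. Suppose the connected component of $e$ in $\mathcal G(E)$ (the set of idempotents joined to $e$ by an $E$-path) is finite, containing $k$ idempotents, which lie in $m$ distinct $\mathcal R$-classes and $n$ distinct $\mathcal L$-classes. Then $\mathcal G(E)(e,e)$ is a free group of rank $k-(m+n)+1$.
   Context: For idempotents $e,f$: $e\,\mathcal R\,f$ iff $ef=f,\ fe=e$; $e\,\mathcal L\,f$ iff $ef=e,\ fe=f$. An $E$-path is a sequence $(e_1,\dots,e_n)$ of idempotents with $e_i\,(\mathcal R\cup\mathcal L)\,e_{i+1}$ for all $i$. A vertex $e_i$ ($1<i<n$) is inessential if $e_{i-1}\,\mathcal R\,e_i\,\mathcal R\,e_{i+1}$ or $e_{i-1}\,\mathcal L\,e_i\,\mathcal L\,e_{i+1}$; an $E$-chain is an equivalence class of $E$-paths under the equivalence generated by inserting or deleting inessential vertices. $\mathcal G(E)$ is the groupoid with object set $E$ whose morphisms from $e$ to $f$ are $E$-chains from $e$ to $f$, composed by concatenation and inverted by reversal; $\mathcal G(E)(e,e)$ denotes the group of morphisms from $e$ to $e$. *)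

(* Defs.v *)
From Stdlib Require Import List Arith Relations.
Import ListNotations.

Record Semigroup := {
  scar :> Type;
  smul : scar -> scar -> scar;
  smul_assoc : forall a b c, smul a (smul b c) = smul (smul a b) c
}.

Definition regular (S : Semigroup) : Prop :=
  forall a : S, exists x : S, smul S (smul S a x) a = a.

Section Idempotents.
Variable S : Semigroup.

Definition idem (e : S) : Prop := smul S e e = e.

Definition Rrel (e f : S) : Prop := smul S e f = f /\ smul S f e = e.
Definition Lrel (e f : S) : Prop := smul S e f = e /\ smul S f e = f.

Fixpoint adjacent_ok (p : list S) : Prop :=
  match p with
  | x :: ((y :: _) as t) => (Rrel x y \/ Lrel x y) /\ adjacent_ok t
  | _ => True
  end.

Definition is_Epath (p : list S) : Prop :=
  p <> [] /\ Forall idem p /\ adjacent_ok p.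

Definition Epath_from_to (p : list S) (e f : S) : Prop :=
  is_Epath p /\ hd_error p = Some e /\ hd_error (rev p) = Some f.

Definition del_step (p q : list S) : Prop :=
  is_Epath p /\
  exists (a b : list S) (x y z : S),
    p = a ++ x :: y :: z :: b /\ q = a ++ x :: z :: b /\
    ((Rrel x y /\ Rrel y z) \/ (Lrel x y /\ Lrel y z)).

(* Equivalence of E-paths generated by inserting/deleting inessential vertices;
   two E-paths are equivalent iff they represent the same E-chain. *)
Definition chain_equiv (p q : list S) : Prop :=
  clos_refl_sym_trans (list S) del_step p q.

Definition connected (e f : S) : Prop := exists p, Epath_from_to p e f.

(* Loops at e: E-paths from e to e; their classes form G(E)(e,e). *)
Definition loop (e : S) (p : list S) : Prop := Epath_from_to p e e.

Definition path_concat (p q : list S) : list S := p ++ tl q.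

End Idempotents.

Definition finite_card {T : Type} (P : T -> Prop) (k : nat) : Prop :=
  exists C : list T, NoDup C /\ (forall x, P x <-> In x C) /\ length C = k.

Definition num_classes {T : Type} (rel : T -> T -> Prop) (P : T -> Prop) (m : nat)
  : Prop :=
  exists reps : list T,
    (forall x, In x reps -> P x) /\
    ForallOrdPairs (fun a b => ~ rel a b) reps /\
    (forall x, P x -> exists r, In r reps /\ rel x r) /\
    length reps = m.

Record Group := {
  gcar :> Type;
  gop : gcar -> gcar -> gcar;
  gone : gcar;
  ginv : gcar -> gcar;
  gop_assoc : forall x y z, gop x (gop y z) = gop (gop x y) z;
  gone_l : forall x, gop gone x = x;
  ginv_l : forall x, gop (ginv x) x = gone
}.

(* A group homomorphism G(E)(e,e) -> H, presented as a map on loops at e that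
   is constant on E-chains and sends concatenation to the product. *)
Definition loop_hom (S : Semigroup) (e : S) (H : Group) (phi : list S -> H) : Prop :=
  (forall p q, loop S e p -> loop S e q -> chain_equiv S p q -> phi p = phi q) /\
  (forall p q, loop S e p -> loop S e q ->
     phi (path_concat S p q) = gop H (phi p) (phi q)).

(* G(E)(e,e) is free of rank r: there are r loops b_0..b_{r-1} at e whose
   classes form a free basis (universal property w.r.t. all groups). *)
Definition vertex_group_free_of_rank (S : Semigroup) (e : S) (r : nat) : Prop :=
  exists b : nat -> list S,
    (forall i, i < r -> loop S e (b i)) /\
    forall (H : Group) (h : nat -> H),
      (exists phi, loop_hom S e H phi /\ forall i, i < r -> phi (b i) = h i) /\
      (forall phi psi, loop_hom S e H phi -> loop_hom S e H psi ->
         (forall i, i < r -> phi (b i) = psi (b i)) ->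
         forall p, loop S e p -> phi p = psi p).

(* Main.v *)
Require Import Defs.
From Stdlib Require Import List Arith Relations Lia ClassicalEpsilon.
Import ListNotations.


Section Basic.
Variable S : Semigroup.

Fixpoint allp (Q : S -> S -> Prop) (l : list S) : Prop :=
  match l with
  | x :: ((y :: _) as t) => Q x y /\ allp Q t
  | _ => True
  end.

Definition adj (x y : S) := Rrel S x y \/ Lrel S x y.

Lemma adjacent_allp l : adjacent_ok S l <-> allp adj l.
Proof. induction l as [|x [|y l] IH]; simpl; try tauto. rewrite IH. reflexivity. Qed.

Lemma allp_app Q l1 x l2 : allp Q (l1 ++ x :: l2) <-> allp Q (l1 ++ [x]) /\ allp Q (x :: l2).
Proof.
  induction l1 as [|a [|b l1] IH]; simpl; try tauto.

Qed.

Lemma allp_mono (Q Q' : S -> S -> Prop) l : (forall a b, Q a b -> Q' a b) -> allp Q l -> allp Q' l.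
Proof. intros H. induction l as [|x [|y l] IH]; simpl; intuition. Qed.

Lemma allp_rev Q l : allp Q l -> allp (fun a b => Q b a) (rev l).
Proof.
  induction l as [|x [|y l] IH]; simpl; auto.
  intros [H1 H2]. specialize (IH H2). simpl in IH.
  replace ((rev l ++ [y]) ++ [x]) with (rev l ++ y :: [x]) by (rewrite <- app_assoc; reflexivity).
  apply allp_app. split; auto. simpl; auto.
Qed.

Lemma Rsym x y : Rrel S x y -> Rrel S y x.
Proof. unfold Rrel; tauto. Qed.
Lemma Lsym x y : Lrel S x y -> Lrel S y x.
Proof. unfold Lrel; tauto. Qed.
Lemma Rtrans x y z : Rrel S x y -> Rrel S y z -> Rrel S x z.
Proof.
  unfold Rrel; intros [H1 H2] [H3 H4]. split.
  - rewrite <- H3, smul_assoc, H1; auto.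
  - rewrite <- H2, smul_assoc, H4; auto.
Qed.
Lemma Ltrans x y z : Lrel S x y -> Lrel S y z -> Lrel S x z.
Proof.
  unfold Lrel; intros [H1 H2] [H3 H4]. split.
  - rewrite <- H1 at 2. rewrite <- H3, smul_assoc, H1; auto.
  - rewrite <- H4. rewrite <- smul_assoc, H2, H4. auto.
Qed.
Lemma Rrefl x : idem S x -> Rrel S x x.
Proof. unfold Rrel, idem; auto. Qed.
Lemma Lrefl x : idem S x -> Lrel S x x.
Proof. unfold Lrel, idem; auto. Qed.
Lemma RL_eq x y : Rrel S x y -> Lrel S x y -> x = y.
Proof. unfold Rrel, Lrel; intros [H1 _] [H2 _]. congruence. Qed.
Lemma adj_sym x y : adj x y -> adj y x.
Proof. unfold adj; intros [H|H]; [left; apply Rsym|right; apply Lsym]; auto. Qed.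

Lemma Epath_iff l : is_Epath S l <-> l <> [] /\ Forall (idem S) l /\ allp adj l.
Proof. unfold is_Epath. rewrite adjacent_allp. tauto. Qed.

Lemma Epath_rev l : is_Epath S l -> is_Epath S (rev l).
Proof.
  rewrite !Epath_iff. intros (H1 & H2 & H3). split; [|split].
  - intro E. apply H1. rewrite <- (rev_involutive l), E. reflexivity.
  - rewrite Forall_forall in *. intros x Hx. apply H2. apply in_rev; auto.
  - apply allp_rev in H3. eapply allp_mono; [|exact H3]. intros; apply adj_sym; auto.
Qed.

Lemma Forall_app_iff {A} (P : A -> Prop) l1 l2 : Forall P (l1 ++ l2) <-> Forall P l1 /\ Forall P l2.
Proof. rewrite !Forall_forall. split. intros H; split; intros; apply H; apply in_or_app; auto.
  intros [H1 H2] x Hx; apply in_app_or in Hx; destruct Hx; auto. Qed.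

Lemma Epath_join a x y b : is_Epath S (a ++ [x]) -> is_Epath S (y :: b) -> adj x y ->
  is_Epath S (a ++ x :: y :: b).
Proof.
  rewrite !Epath_iff. intros (_ & H2 & H3) (_ & H5 & H6) H. split; [|split].
  - destruct a; discriminate.
  - replace (a ++ x :: y :: b) with ((a ++ [x]) ++ y :: b) by (rewrite <- app_assoc; reflexivity).
    apply Forall_app_iff; auto.
  - apply allp_app. split; auto. simpl. auto.
Qed.

Lemma Epath_split l1 x l2 : is_Epath S (l1 ++ x :: l2) -> is_Epath S (l1 ++ [x]) /\ is_Epath S (x :: l2).
Proof.
  rewrite !Epath_iff. intros (_ & H2 & H3). apply allp_app in H3.
  replace (l1 ++ x :: l2) with ((l1 ++ [x]) ++ l2) in H2 by (rewrite <- app_assoc; reflexivity).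
  apply Forall_app_iff in H2. destruct H2 as [H2a H2b].
  split; (split; [destruct l1; discriminate|]); split; try tauto.
  apply Forall_app_iff in H2a. constructor; [|auto]. destruct H2a as [_ H]. inversion H; auto.
Qed.

Lemma del_epath p q : del_step S p q -> is_Epath S q.
Proof.
  intros [Hp (a & b & x & y & z & E1 & E2 & H)]. subst.
  apply Epath_split in Hp. destruct Hp as [Hp1 Hp2].
  replace (x :: y :: z :: b) with ([x;y] ++ z :: b) in Hp2 by reflexivity.
  apply Epath_split in Hp2. destruct Hp2 as [_ Hp3].
  apply Epath_join; auto. destruct H as [[H1 H2]|[H1 H2]]; [left; eapply Rtrans|right; eapply Ltrans]; eauto.
Qed.

Lemma ce_epath p q : chain_equiv S p q -> is_Epath S p -> is_Epath S q.
Proof.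
  intros H. assert (p = q \/ (is_Epath S p /\ is_Epath S q)) as [E|[_ E]]; [|subst; auto|auto].
  induction H.
  - right. split; [apply H|eapply del_epath; eauto].
  - auto.
  - destruct IHclos_refl_sym_trans; [left|right]; intuition.
  - destruct IHclos_refl_sym_trans1 as [E1|E1]; destruct IHclos_refl_sym_trans2 as [E2|E2]; subst; intuition.
Qed.

Lemma del3 A B x y z : is_Epath S (A ++ x :: y :: z :: B) ->
  (Rrel S x y /\ Rrel S y z) \/ (Lrel S x y /\ Lrel S y z) ->
  chain_equiv S (A ++ x :: y :: z :: B) (A ++ x :: z :: B).
Proof. intros H1 H2. apply rst_step. split; auto. exists A, B, x, y, z; auto. Qed.

Lemma Epath_in_idem l x : is_Epath S l -> In x l -> idem S x.
Proof. rewrite Epath_iff. intros (_ & H & _). rewrite Forall_forall in H; auto. Qed.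

Lemma adj_in l1 x y l2 : is_Epath S (l1 ++ x :: y :: l2) -> adj x y.
Proof. intros H. apply Epath_split in H. destruct H as [_ H]. apply Epath_iff in H. simpl in H. tauto. Qed.

Lemma aux_aca A a c B : is_Epath S (A ++ a :: c :: a :: B) -> B <> [] ->
  chain_equiv S (A ++ a :: c :: a :: B) (A ++ a :: B).
Proof.
  intros H HB. destruct B as [|b B]; [congruence|].
  assert (Ha : idem S a) by (eapply Epath_in_idem; eauto; apply in_or_app; simpl; auto).
  assert (Hac : adj a c) by (eapply adj_in; eauto).
  eapply rst_trans. apply del3; auto.
  { destruct Hac as [Hr|Hl]; [left|right]; split; auto; [apply Rsym|apply Lsym]; auto. }
  assert (H2 := del3 _ _ _ _ _ H ltac:(destruct Hac as [Hr|Hl]; [left|right]; split; auto; [apply Rsym|apply Lsym]; auto)).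
  apply ce_epath in H2; auto.
  assert (Hab : adj a b).
  { replace (A ++ a :: a :: b :: B) with ((A ++ [a]) ++ a :: b :: B) in H2 by (rewrite <- app_assoc; reflexivity).
    eapply adj_in; eauto. }
  apply del3; auto. destruct Hab; [left|right]; split; auto; [apply Rrefl|apply Lrefl]; auto.
Qed.

Lemma pal w : forall a c A B, is_Epath S (A ++ a :: w ++ c :: rev w ++ a :: B) -> B <> [] ->
  chain_equiv S (A ++ a :: w ++ c :: rev w ++ a :: B) (A ++ a :: B).
Proof.
  induction w as [|d w IH]; intros a c A B H HB.
  - simpl in *. apply aux_aca; auto.
  - simpl. simpl in H.
    replace (A ++ a :: d :: w ++ c :: (rev w ++ [d]) ++ a :: B) with
      ((A ++ [a]) ++ d :: w ++ c :: rev w ++ d :: a :: B) in * by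
      (repeat (rewrite <- ?app_assoc, <- ?app_comm_cons; simpl); reflexivity).
    eapply rst_trans. apply IH; auto. discriminate.
    assert (H2 := IH _ _ _ _ H ltac:(discriminate)). apply ce_epath in H2; auto.
    replace ((A ++ [a]) ++ d :: a :: B) with (A ++ a :: d :: a :: B) in * by (rewrite <- app_assoc; reflexivity).
    apply aux_aca; auto.
Qed.

End Basic.

Lemma hd_rev_app (S : Type) (l m : list S) : m <> [] -> hd_error (rev (l ++ m)) = hd_error (rev m).
Proof.
  intros Hm. rewrite rev_app_distr. destruct (rev m) eqn:E; simpl; auto.
  exfalso; apply Hm. rewrite <- (rev_involutive m), E. auto.
Qed.

Lemma eft_concat (S : Semigroup) p q a b c : Epath_from_to S p a b -> Epath_from_to S q b c ->
  Epath_from_to S (p ++ tl q) a c.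
Proof.
  intros (Hp & Hpa & Hpb) (Hq & Hqb & Hqc).
  destruct p as [|x p'] using rev_ind; [destruct Hp; congruence|]. clear IHp'.
  rewrite rev_app_distr in Hpb. simpl in Hpb. inversion Hpb; subst x.
  destruct q as [|y q]; [destruct Hq; congruence|]. simpl in Hqb. inversion Hqb; subst y. simpl.
  split; [|split].
  - destruct q as [|y q]; [rewrite app_nil_r; auto|].
    rewrite <- app_assoc. simpl. apply Epath_join; auto. apply (Epath_split S [b] y q Hq). eapply adj_in with (l1 := []); exact Hq.
  - destruct p'; simpl in *; auto.
  - destruct q as [|y q]; [rewrite app_nil_r, rev_app_distr; simpl in *; congruence|].
    rewrite <- app_assoc. rewrite hd_rev_app; [|discriminate]. rewrite <- Hqc.
    change (b :: y :: q) with ([b] ++ y :: q). rewrite hd_rev_app; [auto|discriminate].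
Qed.

Lemma eft_snoc_inv (S : Semigroup) q z y a b : Epath_from_to S ((q ++ [z]) ++ [y]) a b ->
  Epath_from_to S (q ++ [z]) a z /\ adj S z y /\ b = y.
Proof.
  intros (Hp & Ha & Hb). rewrite rev_app_distr in Hb. simpl in Hb. inversion Hb; subst b.
  rewrite <- app_assoc in Hp. simpl in Hp. split; [|split; auto].
  - apply Epath_split in Hp. split; [tauto|split].
    + destruct q; simpl in *; rewrite <- ?app_assoc in Ha; auto.
    + rewrite rev_app_distr; reflexivity.
  - eapply adj_in. exact Hp.
Qed.

Lemma eft_single (S : Semigroup) y a b : Epath_from_to S ([] ++ [y]) a b -> a = y /\ b = y.
Proof. intros (_ & Ha & Hb). simpl in *. split; congruence. Qed.

Lemma gcancel (H : Group) (a : H) : gop H a a = a -> a = gone H.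
Proof.
  intros E. assert (E2 : gop H (ginv H a) (gop H a a) = gop H (ginv H a) a) by (rewrite E; auto).
  rewrite gop_assoc, ginv_l, gone_l in E2. rewrite E2; auto.
Qed.

Lemma ginv_r (H : Group) (a : H) : gop H a (ginv H a) = gone H.
Proof.
  apply gcancel. rewrite <- gop_assoc. f_equal. rewrite gop_assoc, ginv_l, gone_l. auto.
Qed.

Lemma gone_r (H : Group) (a : H) : gop H a (gone H) = a.
Proof. rewrite <- (ginv_l H a), gop_assoc, ginv_r, gone_l. auto. Qed.

Lemma g_uniq (H : Group) (a b c : H) : gop H a b = gone H -> gop H a c = gone H -> b = c.
Proof.
  intros E1 E2. rewrite <- (gone_l H b), <- (gone_l H c), <- (ginv_l H a), <- !gop_assoc, E1, E2. auto.
Qed.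

Fixpoint prodw (S : Semigroup) (H : Group) (w : S -> S -> H) (l : list S) : H :=
  match l with
  | x :: ((y :: _) as t) => gop H (w x y) (prodw S H w t)
  | _ => gone H
  end.

Lemma prodw_app S H w l1 x l2 :
  prodw S H w (l1 ++ x :: l2) = gop H (prodw S H w (l1 ++ [x])) (prodw S H w (x :: l2)).
Proof.
  induction l1 as [|a [|b l1] IH].
  - simpl. rewrite gone_l. auto.
  - simpl. rewrite gone_r. auto.
  - change ((a :: b :: l1) ++ x :: l2) with (a :: ((b :: l1) ++ x :: l2)).
    change ((a :: b :: l1) ++ [x]) with (a :: ((b :: l1) ++ [x])).
    change (prodw S H w (a :: (b :: l1) ++ x :: l2)) with (gop H (w a b) (prodw S H w ((b :: l1) ++ x :: l2))).
    change (prodw S H w (a :: (b :: l1) ++ [x])) with (gop H (w a b) (prodw S H w ((b :: l1) ++ [x]))).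
    rewrite IH. rewrite gop_assoc. auto.
Qed.

Lemma prodw_one S H w l : allp S (fun a b => w a b = gone H) l -> prodw S H w l = gone H.
Proof.
  induction l as [|x [|y l] IH]; auto. intros [H1 H2].
  change (gop H (w x y) (prodw S H w (y :: l)) = gone H). rewrite H1, IH, gone_l; auto.
Qed.

Lemma ginv_ginv (H : Group) (a : H) : ginv H (ginv H a) = a.
Proof. apply (g_uniq H (ginv H a)); [apply ginv_r|apply ginv_l]. Qed.

Lemma ginv_one (H : Group) : ginv H (gone H) = gone H.
Proof. rewrite <- (gone_r H (ginv H (gone H))). apply ginv_l. Qed.


Definition dec (P : Prop) : {P} + {~P} := excluded_middle_informative P.

Fixpoint firstP {T} (P : T -> Prop) (l : list T) (d : T) : T :=
  match l with [] => d | y :: l' => if dec (P y) then y else firstP P l' d end.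

Lemma firstP_found {T} (P : T -> Prop) l d : (exists z, In z l /\ P z) ->
  In (firstP P l d) l /\ P (firstP P l d).
Proof.
  induction l as [|y l IH]; simpl; intros (z & Hz & Pz); [contradiction|].
  destruct (dec (P y)); [auto|]. destruct Hz; [subst; contradiction|].
  destruct IH as [H1 H2]; eauto.
Qed.

Lemma firstP_ext {T} (P Q : T -> Prop) l d : (forall z, P z <-> Q z) -> firstP P l d = firstP Q l d.
Proof.
  intros H. induction l as [|y l IH]; simpl; auto.
  destruct (dec (P y)), (dec (Q y)); firstorder.
Qed.

Lemma firstP_indep {T} (P : T -> Prop) l d d' : (exists z, In z l /\ P z) -> firstP P l d = firstP P l d'.
Proof.
  induction l as [|y l IH]; simpl; intros (z & Hz & Pz); [contradiction|].
  destruct (dec (P y)); [auto|]. destruct Hz; [subst; contradiction|]. eauto.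
Qed.

Lemma fp1 {T} (P : T -> Prop) l1 l2 d : (exists z, In z l1 /\ P z) -> In (firstP P (l1 ++ l2) d) l1.
Proof.
  induction l1 as [|y l IH]; simpl; intros (z & Hz & Pz); [contradiction|].
  destruct (dec (P y)); [auto|]. destruct Hz; [subst; contradiction|]. right; eauto.
Qed.

Lemma fp2 {T} (P : T -> Prop) l1 x l2 d : P x ->
  In (firstP P (l1 ++ x :: l2) d) l1 \/ firstP P (l1 ++ x :: l2) d = x.
Proof.
  intros Px. induction l1 as [|y l IH]; simpl.
  - destruct (dec (P x)); tauto.
  - destruct (dec (P y)); tauto.
Qed.

Fixpoint idx {T} (y : T) (l : list T) : nat :=
  match l with [] => 0 | a :: l' => if dec (a = y) then 0 else S (idx y l') end.

Lemma idx_nth {T} (l : list T) i d : NoDup l -> i < length l -> idx (nth i l d) l = i.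
Proof.
  revert i. induction l as [|a l IH]; intros i Hnd Hi; simpl in *; [lia|].
  inversion Hnd; subst. destruct i as [|i]; simpl.
  - destruct (dec (a = a)); congruence.
  - destruct (dec (a = nth i l d)) as [E|E].
    + exfalso. apply H1. rewrite E. apply nth_In. lia.
    + f_equal. apply IH; auto. lia.
Qed.

Lemma nth_idx {T} (l : list T) y d : In y l -> nth (idx y l) l d = y.
Proof.
  induction l as [|a l IH]; simpl; intros H; [contradiction|].
  destruct (dec (a = y)); auto. destruct H; [congruence|auto].
Qed.

Lemma idx_lt {T} (l : list T) y : In y l -> idx y l < length l.
Proof.
  induction l as [|a l IH]; simpl; intros H; [contradiction|].
  destruct (dec (a = y)); [lia|]. destruct H; [congruence|]. specialize (IH H); lia.
Qed.

Lemma FOP_map_NoDup {A B} (f : A -> B) l :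
  ForallOrdPairs (fun a b => f a <> f b) l -> NoDup (map f l).
Proof.
  induction l as [|a l IH]; intros H; simpl; constructor.
  - inversion H; subst. intro Hin. apply in_map_iff in Hin. destruct Hin as (x & Ex & Hx).
    rewrite Forall_forall in H2. apply (H2 x Hx). auto.
  - inversion H; auto.
Qed.

Lemma FOP_mono {A} (Q Q' : A -> A -> Prop) l :
  (forall a b, In a l -> In b l -> Q a b -> Q' a b) -> ForallOrdPairs Q l -> ForallOrdPairs Q' l.
Proof.
  induction l as [|a l IH]; intros H HF; constructor; inversion HF; subst.
  - rewrite Forall_forall in *. intros x Hx. apply H; simpl; auto.
  - apply IH; auto. intros; apply H; simpl; auto.
Qed.

Lemma reps_le {T} (rel : T -> T -> Prop) (P : T -> Prop) (A B : list T) :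
  (forall x y, P x -> P y -> rel x y -> rel y x) ->
  (forall x y z, P x -> P y -> P z -> rel x y -> rel y z -> rel x z) ->
  (forall x, In x A -> P x) -> (forall x, In x B -> P x) ->
  ForallOrdPairs (fun a b => ~ rel a b) A ->
  (forall x, P x -> exists r, In r B /\ rel x r) ->
  length A <= length B.
Proof.
  intros Hsym Htr HA HB HF Hcov.
  set (f := fun a => firstP (rel a) B a).
  assert (Hf : forall a, In a A -> In (f a) B /\ rel a (f a)).
  { intros a Ha. apply firstP_found. destruct (Hcov a (HA a Ha)) as (r & ? & ?); eauto. }
  rewrite <- (length_map f A). apply NoDup_incl_length.
  - apply FOP_map_NoDup. eapply FOP_mono; [|exact HF]. intros a b Ha Hb Hn E.
    apply Hn. destruct (Hf a Ha) as [H1 H2]. destruct (Hf b Hb) as [H3 H4].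
    rewrite E in H2. assert (Pa := HA a Ha). assert (Pb := HA b Hb). assert (Pf := HB _ H3).
    apply (Htr a (f b) b); auto.
  - intros y Hy. apply in_map_iff in Hy. destruct Hy as (a & <- & Ha). apply Hf; auto.
Qed.

Lemma reps_eq {T} (rel : T -> T -> Prop) (P : T -> Prop) (A B : list T) :
  (forall x y, P x -> P y -> rel x y -> rel y x) ->
  (forall x y z, P x -> P y -> P z -> rel x y -> rel y z -> rel x z) ->
  (forall x, In x A -> P x) -> (forall x, In x B -> P x) ->
  ForallOrdPairs (fun a b => ~ rel a b) A -> ForallOrdPairs (fun a b => ~ rel a b) B ->
  (forall x, P x -> exists r, In r A /\ rel x r) ->
  (forall x, P x -> exists r, In r B /\ rel x r) ->
  length A = length B.
Proof.
  intros. apply Nat.le_antisymm; eapply reps_le; eauto.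
Qed.

Lemma NoDup_FOP {A} (Q : A -> A -> Prop) l : NoDup l ->
  (forall a b, In a l -> In b l -> a <> b -> Q a b) -> ForallOrdPairs Q l.
Proof.
  induction l as [|a l IH]; intros Hnd H; constructor; inversion Hnd; subst.
  - rewrite Forall_forall. intros x Hx. apply H; simpl; auto. congruence.
  - apply IH; auto. intros; apply H; simpl; auto.
Qed.

Lemma filter_count3 {A} (f g h : A -> bool) l :
  (forall x, In x l -> (if f x then 1 else 0) + (if g x then 1 else 0) + (if h x then 1 else 0) = 1) ->
  length (filter f l) + length (filter g l) + length (filter h l) = length l.
Proof.
  induction l as [|a l IH]; intros H; simpl; auto.
  assert (Ha := H a (or_introl eq_refl)).
  assert (IH' := IH (fun x Hx => H x (or_intror Hx))).
  destruct (f a), (g a), (h a); simpl in *; lia.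
Qed.


Section Main.
Variable S : Semigroup.
Variable e : S.
Variable rest : list S.
Let ord := e :: rest.
Hypothesis He : idem S e.
Hypothesis Hnd : NoDup ord.
Hypothesis Hconn : forall x, In x ord <-> connected S e x.
Hypothesis Hadj : forall l1 x l2, ord = l1 ++ x :: l2 -> l1 <> [] -> exists z, In z l1 /\ adj S z x.

Lemma inord_idem x : In x ord -> idem S x.
Proof.
  intros H. apply Hconn in H. destruct H as (p & Hp & _ & Hl).
  eapply Epath_in_idem; eauto. apply in_rev. destruct (rev p); simpl in *; [discriminate|].
  inversion Hl; auto.
Qed.

Definition root (rel : S -> S -> Prop) x := firstP (rel x) ord x.

Section Root.
Variable rel : S -> S -> Prop.
Hypothesis rsym : forall x y, rel x y -> rel y x.
Hypothesis rtr : forall x y z, rel x y -> rel y z -> rel x z.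
Hypothesis rrf : forall x, In x ord -> rel x x.

Lemma root_spec x : In x ord -> In (root rel x) ord /\ rel x (root rel x).
Proof. intros H. apply firstP_found. eauto. Qed.

Lemma root_eq x y : In x ord -> In y ord -> rel x y -> root rel x = root rel y.
Proof.
  intros Hx Hy H. unfold root. rewrite (firstP_ext (rel x) (rel y)).
  - apply firstP_indep. eauto.
  - intros z; split; intros; eauto.
Qed.

Lemma root_root x : In x ord -> root rel (root rel x) = root rel x.
Proof.
  intros H. destruct (root_spec x H) as [H1 H2]. symmetry. apply root_eq; auto.
Qed.

Lemma root_before l1 x l2 : ord = l1 ++ x :: l2 -> root rel x <> x -> In (root rel x) l1.
Proof.
  intros E Hn. unfold root. rewrite E.
  assert (Hx : In x ord) by (rewrite E; apply in_or_app; simpl; auto).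
  destruct (fp2 (rel x) l1 x l2 x (rrf x Hx)) as [H|H]; auto. rewrite <- E in H. contradiction.
Qed.

Lemma root_adj l1 x l2 z : ord = l1 ++ x :: l2 -> In z l1 -> rel z x -> In (root rel x) l1.
Proof. intros E Hz H. unfold root. rewrite E. apply fp1. eauto. Qed.

Lemma root_e : root rel e = e.
Proof.
  unfold root, ord. simpl. destruct (dec (rel e e)) as [_|n]; auto.
  exfalso; apply n, rrf; simpl; auto.
Qed.
End Root.

Definition rootR := root (Rrel S).
Definition rootL := root (Lrel S).

Lemma Rrf x : In x ord -> Rrel S x x.
Proof. intros; apply Rrefl, inord_idem; auto. Qed.
Lemma Lrf x : In x ord -> Lrel S x x.
Proof. intros; apply Lrefl, inord_idem; auto. Qed.

Lemma rootR_spec x : In x ord -> In (rootR x) ord /\ Rrel S x (rootR x).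
Proof. intros; eapply root_spec; eauto using Rsym, Rtrans, Rrf. Qed.
Lemma rootL_spec x : In x ord -> In (rootL x) ord /\ Lrel S x (rootL x).
Proof. intros; eapply root_spec; eauto using Lsym, Ltrans, Lrf. Qed.
Lemma rootR_eq x y : In x ord -> In y ord -> Rrel S x y -> rootR x = rootR y.
Proof. intros; eapply root_eq; eauto using Rsym, Rtrans, Rrf. Qed.
Lemma rootL_eq x y : In x ord -> In y ord -> Lrel S x y -> rootL x = rootL y.
Proof. intros; eapply root_eq; eauto using Lsym, Ltrans, Lrf. Qed.
Lemma rootR_root x : In x ord -> rootR (rootR x) = rootR x.
Proof. intros; eapply root_root; eauto using Rsym, Rtrans, Rrf. Qed.
Lemma rootL_root x : In x ord -> rootL (rootL x) = rootL x.
Proof. intros; eapply root_root; eauto using Lsym, Ltrans, Lrf. Qed.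

Lemma in_ord_split l1 x l2 : ord = l1 ++ x :: l2 -> In x ord.
Proof. intros E; rewrite E; apply in_or_app; simpl; auto. Qed.

Lemma not_both_root x : In x ord -> x <> e -> ~ (rootR x = x /\ rootL x = x).
Proof.
  intros Hx Hne [H1 H2]. destruct (in_split x ord Hx) as (l1 & l2 & E).
  assert (Hl1 : l1 <> []) by (intro; subst; simpl in E; unfold ord in E; congruence).
  destruct (Hadj l1 x l2 E Hl1) as (z & Hz & [Hr|Hl]).
  - assert (In (rootR x) l1) by (eapply root_adj; eauto; apply Rsym; auto).
    rewrite H1 in H. assert (Hn := Hnd). rewrite E in Hn. apply NoDup_remove_2 in Hn.
    apply Hn. apply in_or_app; auto.
  - assert (In (rootL x) l1) by (eapply root_adj; eauto; apply Lsym; auto).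
    rewrite H2 in H. assert (Hn := Hnd). rewrite E in Hn. apply NoDup_remove_2 in Hn.
    apply Hn. apply in_or_app; auto.
Qed.

Definition par x := if dec (rootR x = x) then rootL x else rootR x.

Lemma par_spec l1 x l2 : ord = l1 ++ x :: l2 -> x <> e ->
  In (par x) l1 /\ adj S (par x) x /\ In (par x) ord.
Proof.
  intros E Hne. assert (Hx := in_ord_split _ _ _ E). unfold par.
  destruct (dec (rootR x = x)) as [H|H].
  - assert (H2 : rootL x <> x) by (intro; apply (not_both_root x); auto).
    destruct (rootL_spec x Hx). split; [|split]; auto.
    + eapply root_before; eauto using Lrf.
    + right. apply Lsym; auto.
  - destruct (rootR_spec x Hx). split; [|split]; auto.
    + eapply root_before; eauto using Rrf.
    + left. apply Rsym; auto.
Qed.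

Lemma ord_ind (P : S -> Prop) :
  (forall l1 x l2, ord = l1 ++ x :: l2 -> (forall y, In y l1 -> P y) -> P x) ->
  forall x, In x ord -> P x.
Proof.
  intros H.
  assert (forall l1 l2, ord = l1 ++ l2 -> forall y, In y l1 -> P y).
  { induction l1 as [|x l1 IH] using rev_ind; intros l2 E y Hy; [contradiction|].
    rewrite <- app_assoc in E. simpl in E.
    apply in_app_or in Hy. destruct Hy as [Hy|[<-|[]]].
    - eapply IH; eauto.
    - eapply H; eauto. }
  intros x Hx. apply (H0 ord []); auto. rewrite app_nil_r; auto.
Qed.

Fixpoint Wr (l : list S) (x : S) : list S :=
  match l with
  | [] => []
  | y :: l' => if dec (x = y) then (if dec (x = e) then [] else Wr l' (par x) ++ [par x])
               else Wr l' x
  end.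

Lemma Wr_skip l2 l1 y : ~ In y l2 -> Wr (l2 ++ l1) y = Wr l1 y.
Proof.
  induction l2 as [|a l2 IH]; simpl; intros H; auto.
  destruct (dec (y = a)); [subst; tauto|]. auto.
Qed.

Definition W x := Wr (rev ord) x.

Lemma W_split l1 x l2 : ord = l1 ++ x :: l2 -> W x = Wr (x :: rev l1) x.
Proof.
  intros E. unfold W. rewrite E. rewrite rev_app_distr. simpl. rewrite <- app_assoc. simpl.
  apply Wr_skip. intros Hin. apply in_rev in Hin.
  assert (Hn := Hnd). rewrite E in Hn. apply NoDup_remove_2 in Hn. apply Hn. apply in_or_app; auto.
Qed.

Lemma W_e : W e = [].
Proof.
  rewrite (W_split [] e rest); auto. simpl. destruct (dec (e = e)); congruence.
Qed.

Lemma W_eq x : In x ord -> x <> e -> W x = W (par x) ++ [par x].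
Proof.
  intros Hx Hne. destruct (in_split x ord Hx) as (l1 & l2 & E).
  rewrite (W_split _ _ _ E). simpl. destruct (dec (x = x)); [|congruence].
  destruct (dec (x = e)); [congruence|]. f_equal.
  destruct (par_spec _ _ _ E Hne) as (Hp & _ & _).
  destruct (in_split _ _ Hp) as (la & lb & E1).
  assert (E2 : ord = la ++ par x :: (lb ++ x :: l2)) by (rewrite E, E1, <- app_assoc; reflexivity).
  rewrite (W_split _ _ _ E2). rewrite E1. rewrite rev_app_distr. simpl. rewrite <- app_assoc. simpl.
  apply Wr_skip. intros Hin. apply in_rev in Hin.
  assert (Hn := Hnd). rewrite E2 in Hn. apply NoDup_remove_2 in Hn. apply Hn. apply in_or_app; right.
  apply in_or_app; auto.
Qed.

Definition TPair (a b : S) := (a = e /\ b = e) \/ (In b ord /\ b <> e /\ a = par b).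

Lemma W_tree x : In x ord -> allp S TPair (e :: W x ++ [x]) /\ (forall y, In y (W x) -> In y ord).
Proof.
  revert x. apply (ord_ind (fun x => allp S TPair (e :: W x ++ [x]) /\ (forall y, In y (W x) -> In y ord))).
  intros l1 y l2 E IH.
  assert (Hy := in_ord_split _ _ _ E).
  destruct (dec (y = e)) as [->|Hne].
  - rewrite W_e. simpl. split; [|tauto]. split; auto. left; auto.
  - destruct (par_spec _ _ _ E Hne) as (Hp & _ & Hpo).
    destruct (IH _ Hp) as [H1 H2]. rewrite (W_eq y Hy Hne).
    split.
    + replace (e :: (W (par y) ++ [par y]) ++ [y]) with ((e :: W (par y)) ++ par y :: [y])
        by (simpl; rewrite <- app_assoc; reflexivity).
      apply allp_app. split; [exact H1|]. simpl. split; auto. right; auto.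
    + intros z Hz. apply in_app_or in Hz. destruct Hz as [Hz|[<-|[]]]; auto.
Qed.

Lemma TPair_adj a b : TPair a b -> adj S a b.
Proof.
  intros [[-> ->]|(Hb & Hne & ->)].
  - left; apply Rrefl; auto.
  - destruct (in_split b ord Hb) as (l1 & l2 & E). apply (par_spec _ _ _ E Hne).
Qed.

Lemma W_path x : In x ord -> is_Epath S (e :: W x ++ [x]).
Proof.
  intros Hx. destruct (W_tree x Hx) as [H1 H2]. apply Epath_iff. split; [discriminate|split].
  - constructor; auto. apply Forall_app_iff. split.
    + rewrite Forall_forall; intros; apply inord_idem; auto.
    + constructor; auto. apply inord_idem; auto.
  - eapply allp_mono; [|exact H1]. apply TPair_adj.
Qed.

Definition ell x y := e :: W x ++ x :: y :: rev (W y) ++ [e].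

Lemma ell_path x y : In x ord -> In y ord -> adj S x y -> is_Epath S (ell x y).
Proof.
  intros Hx Hy H. unfold ell.
  change (e :: W x ++ x :: y :: rev (W y) ++ [e]) with ((e :: W x) ++ x :: y :: rev (W y) ++ [e]).
  apply Epath_join; auto.
  - apply W_path; auto.
  - assert (Hp := Epath_rev S _ (W_path y Hy)). simpl in Hp. rewrite rev_app_distr in Hp.
    simpl in Hp. exact Hp.
Qed.

Lemma last_hd (l : list S) a : hd_error (rev (l ++ [a])) = Some a.
Proof. rewrite rev_app_distr. reflexivity. Qed.

Lemma ell_loop x y : In x ord -> In y ord -> adj S x y -> loop S e (ell x y).
Proof.
  intros. split; [apply ell_path; auto|split; auto].
  unfold ell. replace (e :: W x ++ x :: y :: rev (W y) ++ [e]) with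
    ((e :: W x ++ x :: y :: rev (W y)) ++ [e]) by (simpl; rewrite <- app_assoc; reflexivity).
  apply last_hd.
Qed.


Ltac leq := repeat (simpl; rewrite <- ?app_assoc); simpl; rewrite ?rev_involutive; reflexivity.

Lemma ord_of_path q y : Epath_from_to S q e y -> In y ord.
Proof. intros H. apply Hconn. exists q; auto. Qed.

Lemma loop_ee : loop S e [e; e].
Proof. split; [apply Epath_iff; simpl; repeat split; auto; [discriminate| left; apply Rrefl; auto]|split; auto]. Qed.

Section Hom.
Variable H : Group.
Variable phi : list S -> H.
Hypothesis Hphi : loop_hom S e H phi.

Lemma phi_ee : phi [e; e] = gone H.
Proof.
  apply gcancel. rewrite <- (proj2 Hphi); try apply loop_ee. apply (proj1 Hphi).
  - apply (eft_concat S _ _ e e e); apply loop_ee.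
  - apply loop_ee.
  - simpl. apply (del3 S [] []). apply (eft_concat S [e;e] [e;e] e e e); apply loop_ee. left; split; apply Rrefl; auto.
Qed.

Lemma lam3 x z y : In x ord -> In z ord -> In y ord ->
  (Rrel S x z /\ Rrel S z y) \/ (Lrel S x z /\ Lrel S z y) ->
  gop H (phi (ell x z)) (phi (ell z y)) = phi (ell x y).
Proof.
  intros Hx Hz Hy Hr.
  assert (Axz : adj S x z) by (destruct Hr as [[]|[]]; [left|right]; auto).
  assert (Azy : adj S z y) by (destruct Hr as [[]|[]]; [left|right]; auto).
  assert (Axy : adj S x y) by (destruct Hr as [[]|[]]; [left; eapply Rtrans|right; eapply Ltrans]; eauto).
  rewrite <- (proj2 Hphi); try apply ell_loop; auto.
  assert (Hc : loop S e (path_concat S (ell x z) (ell z y))).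
  { apply (eft_concat S _ _ e e e); apply ell_loop; auto. }
  apply (proj1 Hphi); auto. apply ell_loop; auto.
  assert (EL : path_concat S (ell x z) (ell z y) =
    (e :: W x ++ [x]) ++ z :: rev (W z) ++ e :: rev (rev (W z)) ++ z :: (y :: rev (W y) ++ [e])).
  { unfold path_concat, ell. leq. }
  rewrite EL in *. destruct Hc as [Hc _].
  eapply rst_trans. apply pal; auto. discriminate.
  assert (Hc2 := pal S (rev (W z)) z e (e :: W x ++ [x]) (y :: rev (W y) ++ [e]) Hc ltac:(discriminate)).
  apply ce_epath in Hc2; auto.
  assert (E2 : (e :: W x ++ [x]) ++ z :: y :: rev (W y) ++ [e] =
    (e :: W x) ++ x :: z :: y :: (rev (W y) ++ [e])) by leq.
  rewrite E2 in *.
  replace (ell x y) with ((e :: W x) ++ x :: y :: (rev (W y) ++ [e])) by (unfold ell; leq).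
  apply del3; auto.
Qed.

Lemma lam_xx x : In x ord -> phi (ell x x) = gone H.
Proof. intros Hx. apply gcancel. apply lam3; auto. left; split; apply Rrf; auto. Qed.

Lemma lam_inv x y : In x ord -> In y ord -> adj S x y ->
  gop H (phi (ell x y)) (phi (ell y x)) = gone H.
Proof.
  intros Hx Hy A. rewrite lam3; auto. apply lam_xx; auto.
  destruct A; [left|right]; split; auto; [apply Rsym|apply Lsym]; auto.
Qed.

Lemma lam_tree x : In x ord -> x <> e -> phi (ell (par x) x) = gone H /\ phi (ell x (par x)) = gone H.
Proof.
  intros Hx Hne. destruct (in_split x ord Hx) as (l1 & l2 & E).
  destruct (par_spec _ _ _ E Hne) as (_ & A & Hp).
  assert (H1 : phi (ell (par x) x) = gone H).
  { rewrite <- (lam_xx (par x)); auto. apply (proj1 Hphi); try apply ell_loop; auto.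
    - left; apply Rrf; auto.
    - unfold ell. rewrite (W_eq x Hx Hne).
      replace (e :: W (par x) ++ par x :: x :: rev (W (par x) ++ [par x]) ++ [e]) with
        ((e :: W (par x)) ++ par x :: x :: par x :: (rev (W (par x)) ++ [e])) by (rewrite rev_app_distr; leq).
      replace (e :: W (par x) ++ par x :: par x :: rev (W (par x)) ++ [e]) with
        ((e :: W (par x)) ++ par x :: par x :: (rev (W (par x)) ++ [e])) by leq.
      apply del3.
      + assert (Hl := ell_path (par x) x Hp Hx A). unfold ell in Hl. rewrite (W_eq x Hx Hne) in Hl.
        refine (eq_ind _ (is_Epath S) Hl _ _). rewrite rev_app_distr. leq.
      + destruct A; [left|right]; split; auto; [apply Rsym|apply Lsym]; auto. }
  split; auto. assert (Hi := lam_inv (par x) x Hp Hx A). rewrite H1, gone_l in Hi. auto.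
Qed.

End Hom.

Definition NTb x : bool := if dec (rootR x <> x /\ rootL x <> x) then true else false.
Definition NT := filter NTb ord.

Lemma rootR_e : rootR e = e.
Proof. apply root_e. exact Rrf. Qed.
Lemma rootL_e : rootL e = e.
Proof. apply root_e. exact Lrf. Qed.

Lemma par_R x : rootR x <> x -> par x = rootR x.
Proof. unfold par. destruct (dec (rootR x = x)); tauto. Qed.
Lemma par_L x : rootR x = x -> par x = rootL x.
Proof. unfold par. destruct (dec (rootR x = x)); tauto. Qed.

Lemma close_loop q y : Epath_from_to S (q ++ [y]) e y -> loop S e ((q ++ [y]) ++ rev (W y) ++ [e]).
Proof.
  intros Hq. assert (Hy : In y ord) by (eapply ord_of_path; eauto).
  change (rev (W y) ++ [e]) with (tl (y :: rev (W y) ++ [e])).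
  apply (eft_concat S _ _ e y e); auto.
  assert (Hp := Epath_rev S _ (W_path y Hy)).
  split; [|split].
  - refine (eq_ind _ (is_Epath S) Hp _ _). simpl. rewrite rev_app_distr. reflexivity.
  - reflexivity.
  - change (y :: rev (W y) ++ [e]) with ((y :: rev (W y)) ++ [e]). apply last_hd.
Qed.

Section Uniq.
Variable H : Group.
Variables phi psi : list S -> H.
Hypothesis Hphi : loop_hom S e H phi.
Hypothesis Hpsi : loop_hom S e H psi.
Hypothesis Hgen : forall x, In x NT -> phi (ell x (rootL x)) = psi (ell x (rootL x)).

Lemma lam_roots x : In x ord ->
  phi (ell x (rootR x)) = psi (ell x (rootR x)) /\ phi (ell x (rootL x)) = psi (ell x (rootL x)).
Proof.
  intros Hx. destruct (dec (x = e)) as [->|Hne].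
  { rewrite rootR_e, rootL_e, !(lam_xx H phi), !(lam_xx H psi); auto; simpl; auto. }
  split.
  - destruct (dec (rootR x = x)) as [E|E].
    + rewrite E, (lam_xx H phi), (lam_xx H psi); auto.
    + rewrite <- (par_R x E). rewrite (proj2 (lam_tree H phi Hphi x Hx Hne)), (proj2 (lam_tree H psi Hpsi x Hx Hne)). auto.
  - destruct (dec (rootL x = x)) as [E|E].
    + rewrite E, (lam_xx H phi), (lam_xx H psi); auto.
    + destruct (dec (rootR x = x)) as [E2|E2].
      * rewrite <- (par_L x E2). rewrite (proj2 (lam_tree H phi Hphi x Hx Hne)), (proj2 (lam_tree H psi Hpsi x Hx Hne)). auto.
      * apply Hgen. apply filter_In. split; auto. unfold NTb. destruct (dec _); tauto.
Qed.

Lemma lam_all x y : In x ord -> In y ord -> adj S x y -> phi (ell x y) = psi (ell x y).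
Proof.
  intros Hx Hy [A|A].
  - destruct (rootR_spec x Hx) as [Hr1 Hr2]. destruct (rootR_spec y Hy) as [_ Hr3].
    rewrite <- (rootR_eq x y Hx Hy A) in Hr3.
    set (r := rootR x) in *.
    assert (Ary : adj S r y) by (left; apply Rsym; auto).
    assert (Ayr : adj S y r) by (left; auto).
    rewrite <- (lam3 H phi Hphi x r y), <- (lam3 H psi Hpsi x r y); auto; [|left; split; auto; apply Rsym; auto|left; split; auto; apply Rsym; auto].
    f_equal. apply (proj1 (lam_roots x Hx)).
    apply (g_uniq H (phi (ell y r))).
    + apply lam_inv; auto.
    + assert (E : phi (ell y r) = psi (ell y r)).
      { unfold r. rewrite (rootR_eq x y Hx Hy A). apply (lam_roots y Hy). }
      rewrite E. apply lam_inv; auto.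
  - destruct (rootL_spec x Hx) as [Hr1 Hr2]. destruct (rootL_spec y Hy) as [_ Hr3].
    rewrite <- (rootL_eq x y Hx Hy A) in Hr3.
    set (r := rootL x) in *.
    assert (Ary : adj S r y) by (right; apply Lsym; auto).
    assert (Ayr : adj S y r) by (right; auto).
    rewrite <- (lam3 H phi Hphi x r y), <- (lam3 H psi Hpsi x r y); auto; [|right; split; auto; apply Lsym; auto|right; split; auto; apply Lsym; auto].
    f_equal. apply (proj2 (lam_roots x Hx)).
    apply (g_uniq H (phi (ell y r))).
    + apply lam_inv; auto.
    + assert (E : phi (ell y r) = psi (ell y r)).
      { unfold r. rewrite (rootL_eq x y Hx Hy A). apply (lam_roots y Hy). }
      rewrite E. apply lam_inv; auto.
Qed.

Lemma close_eq q : forall y, Epath_from_to S (q ++ [y]) e y ->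
  phi ((q ++ [y]) ++ rev (W y) ++ [e]) = psi ((q ++ [y]) ++ rev (W y) ++ [e]).
Proof.
  induction q as [|z q IH] using rev_ind; intros y Hq.
  - destruct (eft_single S y e y Hq) as [<- _]. rewrite W_e. simpl.
    rewrite (phi_ee H phi Hphi), (phi_ee H psi Hpsi). auto.
  - destruct (eft_snoc_inv S q z y e y Hq) as (Hq' & A & _).
    assert (Hz : In z ord) by (eapply ord_of_path; eauto).
    assert (Hy : In y ord) by (eapply ord_of_path; eauto).
    assert (EC : chain_equiv S (path_concat S ((q ++ [z]) ++ rev (W z) ++ [e]) (ell z y))
                   (((q ++ [z]) ++ [y]) ++ rev (W y) ++ [e])).
    { assert (E1 : path_concat S ((q ++ [z]) ++ rev (W z) ++ [e]) (ell z y) =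
        q ++ z :: rev (W z) ++ e :: rev (rev (W z)) ++ z :: (y :: rev (W y) ++ [e])).
      { unfold path_concat, ell. leq. }
      rewrite E1. replace (((q ++ [z]) ++ [y]) ++ rev (W y) ++ [e]) with (q ++ z :: (y :: rev (W y) ++ [e])) by leq.
      apply pal; [|discriminate]. rewrite <- E1.
      apply (eft_concat S _ _ e e e). apply close_loop; auto. apply ell_loop; auto. }
    assert (L1 : loop S e (path_concat S ((q ++ [z]) ++ rev (W z) ++ [e]) (ell z y))).
    { apply (eft_concat S _ _ e e e). apply close_loop; auto. apply ell_loop; auto. }
    rewrite <- (proj1 Hphi _ _ L1 (close_loop _ _ Hq) EC), <- (proj1 Hpsi _ _ L1 (close_loop _ _ Hq) EC).
    rewrite (proj2 Hphi), (proj2 Hpsi); try apply close_loop; try apply ell_loop; auto.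
    rewrite IH, lam_all; auto.
Qed.

Lemma uniq_all p : loop S e p -> phi p = psi p.
Proof.
  intros Hp. destruct p as [|y q] using rev_ind; [destruct Hp as [[]]; congruence|]. clear IHq.
  assert (Ey : y = e) by (destruct Hp as (_ & _ & Hl); rewrite rev_app_distr in Hl; simpl in Hl; congruence).
  subst y.
  assert (E : path_concat S (q ++ [e]) [e; e] = (q ++ [e]) ++ rev (W e) ++ [e]) by (rewrite W_e; reflexivity).
  assert (C1 := proj2 Hphi _ _ Hp loop_ee). assert (C2 := proj2 Hpsi _ _ Hp loop_ee).
  rewrite E, (phi_ee H phi Hphi), gone_r in C1. rewrite E, (phi_ee H psi Hpsi), gone_r in C2.
  rewrite <- C1, <- C2. apply close_eq. exact Hp.
Qed.

End Uniq.

Lemma NT_spec x : In x NT <-> In x ord /\ rootR x <> x /\ rootL x <> x.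
Proof.
  unfold NT. rewrite filter_In. unfold NTb. destruct (dec _); intuition congruence.
Qed.

Section Exist.
Variable H : Group.
Variable h : nat -> H.

Definition beta x := if dec (In x NT) then ginv H (h (idx x NT)) else gone H.
Definition wt x y := if dec (Rrel S x y) then gone H else gop H (ginv H (beta x)) (beta y).
Definition phiw := prodw S H wt.

Lemma wt_L x y : Lrel S x y -> wt x y = gop H (ginv H (beta x)) (beta y).
Proof.
  intros A. unfold wt. destruct (dec (Rrel S x y)) as [R|]; auto.
  rewrite <- (RL_eq S x y R A). rewrite ginv_l. auto.
Qed.

Lemma wt_cocycle x y z : (Rrel S x y /\ Rrel S y z) \/ (Lrel S x y /\ Lrel S y z) ->
  gop H (wt x y) (wt y z) = wt x z.
Proof.
  intros [[A B]|[A B]].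
  - unfold wt. destruct (dec (Rrel S x y)); [|tauto]. destruct (dec (Rrel S y z)); [|tauto].
    destruct (dec (Rrel S x z)) as [|n]; [apply gone_l|]. exfalso; apply n; eapply Rtrans; eauto.
  - rewrite !wt_L; auto; [|eapply Ltrans; eauto].
    rewrite <- gop_assoc, (gop_assoc H (beta y)), ginv_r, gone_l. auto.
Qed.

Lemma phiw_del p q : del_step S p q -> phiw p = phiw q.
Proof.
  intros [_ (a & b & x & y & z & E1 & E2 & Hr)]. subst p q. unfold phiw.
  rewrite (prodw_app S H wt a x (y :: z :: b)), (prodw_app S H wt a x (z :: b)).
  f_equal.
  change (gop H (wt x y) (gop H (wt y z) (prodw S H wt (z :: b))) =
          gop H (wt x z) (prodw S H wt (z :: b))).
  rewrite gop_assoc, wt_cocycle; auto.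
Qed.

Lemma phiw_ce p q : chain_equiv S p q -> phiw p = phiw q.
Proof.
  induction 1 as [p q Hd|p|p q _ IH|p q r _ IH1 _ IH2].
  - apply phiw_del; auto.
  - reflexivity.
  - symmetry; exact IH.
  - rewrite IH1; exact IH2.
Qed.

Lemma phiw_hom : loop_hom S e H phiw.
Proof.
  split.
  - intros; apply phiw_ce; auto.
  - intros p q (Hp & _ & Hpl) (Hq & Hqh & _).
    destruct p as [|y p] using rev_ind; [destruct Hp; congruence|]. clear IHp.
    rewrite rev_app_distr in Hpl. simpl in Hpl. inversion Hpl; subst y.
    destruct q as [|y q]; [destruct Hq; congruence|]. simpl in Hqh. inversion Hqh; subst y.
    unfold path_concat. simpl. rewrite <- app_assoc. simpl. unfold phiw. apply prodw_app.
Qed.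

Lemma beta_root x : In x ord -> rootL x = x -> beta x = gone H.
Proof. intros Hx E. unfold beta. destruct (dec (In x NT)) as [I|]; auto. apply NT_spec in I. tauto. Qed.
Lemma beta_rootR x : In x ord -> rootR x = x -> beta x = gone H.
Proof. intros Hx E. unfold beta. destruct (dec (In x NT)) as [I|]; auto. apply NT_spec in I. tauto. Qed.

Lemma wt_tree a b : TPair a b -> wt a b = gone H /\ wt b a = gone H.
Proof.
  intros [[-> ->]|(Hb & Hne & ->)].
  - unfold wt. destruct (dec (Rrel S e e)) as [|n]; [auto|exfalso; apply n, Rrefl; auto].
  - destruct (dec (rootR b = b)) as [E|E].
    + rewrite (par_L b E). destruct (rootL_spec b Hb) as [Hr A].
      assert (Er : rootL (rootL b) = rootL b) by (apply rootL_root; auto).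
      rewrite !wt_L; auto; [|apply Lsym; auto].
      rewrite (beta_rootR b Hb E), (beta_root _ Hr Er), ginv_one, gone_l. auto.
    + rewrite (par_R b E). destruct (rootR_spec b Hb) as [Hr A].
      unfold wt. destruct (dec (Rrel S (rootR b) b)) as [|n]; [|exfalso; apply n, Rsym; auto].
      destruct (dec (Rrel S b (rootR b))); tauto.
Qed.

Lemma phiw_ell x y : In x ord -> In y ord -> phiw (ell x y) = wt x y.
Proof.
  intros Hx Hy. unfold phiw, ell.
  change (e :: W x ++ x :: y :: rev (W y) ++ [e]) with ((e :: W x) ++ x :: y :: rev (W y) ++ [e]).
  rewrite prodw_app. rewrite prodw_one.
  2:{ eapply allp_mono; [|apply (W_tree x Hx)]. intros a b T; apply (wt_tree a b T). }
  rewrite gone_l. change (gop H (wt x y) (prodw S H wt (y :: rev (W y) ++ [e])) = wt x y).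
  rewrite prodw_one; [apply gone_r|].
  assert (T := allp_rev S _ _ (proj1 (W_tree y Hy))). simpl in T. rewrite rev_app_distr in T. simpl in T.
  eapply allp_mono; [|exact T]. intros a b Tab. apply (wt_tree b a Tab).
Qed.

Lemma phiw_gen x : In x NT -> phiw (ell x (rootL x)) = h (idx x NT).
Proof.
  intros Hn. assert (Hn' := Hn). apply NT_spec in Hn' as (Hx & E1 & E2).
  destruct (rootL_spec x Hx) as [Hr A].
  rewrite phiw_ell; auto. rewrite wt_L; auto.
  rewrite (beta_root _ Hr (rootL_root x Hx)), gone_r. unfold beta.
  destruct (dec (In x NT)); [apply ginv_ginv|contradiction].
Qed.

End Exist.

Definition bgen i := ell (nth i NT e) (rootL (nth i NT e)).

Lemma free_NT : vertex_group_free_of_rank S e (length NT).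
Proof.
  exists bgen. split.
  - intros i Hi. assert (I := nth_In NT e Hi). apply NT_spec in I as I'. destruct I' as (Hx & _).
    destruct (rootL_spec _ Hx). apply ell_loop; auto. right; auto.
  - intros H h. assert (NDNT : NoDup NT) by (apply NoDup_filter; auto).
    split.
    + exists (phiw H h). split; [apply phiw_hom|].
      intros i Hi. unfold bgen. rewrite phiw_gen; [|apply nth_In; auto].
      rewrite idx_nth; auto.
    + intros phi psi Hphi Hpsi Hb. apply uniq_all; auto.
      intros x Hx. rewrite <- (nth_idx NT x e Hx). apply Hb. apply idx_lt; auto.
Qed.

Definition RRb x : bool := if dec (rootR x = x) then true else false.
Definition LRb x : bool := if dec (rootL x = x) then true else false.

Lemma count3 : length (filter RRb ord) + length (filter LRb ord) + length NT = length ord + 1.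
Proof.
  assert (R1 : RRb e = true) by (unfold RRb; rewrite rootR_e; destruct (dec (e = e)); congruence).
  assert (L1 : LRb e = true) by (unfold LRb; rewrite rootL_e; destruct (dec (e = e)); congruence).
  assert (N1 : NTb e = false) by (unfold NTb; rewrite rootL_e; destruct (dec _); tauto).
  unfold NT, ord. simpl. rewrite R1, L1, N1. simpl.
  assert (Hr : ~ In e rest) by (inversion Hnd; auto).
  rewrite <- (filter_count3 RRb LRb NTb rest); [lia|].
  intros x Hx. assert (Hxo : In x ord) by (right; auto).
  assert (Hne : x <> e) by (intro; subst; contradiction).
  assert (NB := not_both_root x Hxo Hne).
  unfold RRb, LRb, NTb. destruct (dec (rootR x = x)), (dec (rootL x = x)), (dec (rootR x <> x /\ rootL x <> x)); tauto || lia.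
Qed.

Lemma reps_R m : num_classes (Rrel S) (connected S e) m -> length (filter RRb ord) = m.
Proof.
  intros (A & HA & HF & Hcov & Hl). subst m. symmetry.
  apply (reps_eq (Rrel S) (connected S e)); auto.
  - intros; apply Rsym; auto.
  - intros; eapply Rtrans; eauto.
  - intros x Hx. apply filter_In in Hx. apply Hconn; tauto.
  - apply NoDup_FOP. apply NoDup_filter; auto.
    intros a b Ha Hb Hab Rab. apply filter_In in Ha as [Ha Ea]. apply filter_In in Hb as [Hb Eb].
    unfold RRb in *. destruct (dec (rootR a = a)) as [Ea'|]; [|discriminate].
    destruct (dec (rootR b = b)) as [Eb'|]; [|discriminate].
    apply Hab. rewrite <- Ea', <- Eb'. apply rootR_eq; auto.
  - intros x Hx. apply Hconn in Hx. destruct (rootR_spec x Hx) as [H1 H2].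
    exists (rootR x). split; auto. apply filter_In. split; auto. unfold RRb.
    destruct (dec _) as [|n]; auto. exfalso; apply n, rootR_root; auto.
Qed.

Lemma reps_L n : num_classes (Lrel S) (connected S e) n -> length (filter LRb ord) = n.
Proof.
  intros (A & HA & HF & Hcov & Hl). subst n. symmetry.
  apply (reps_eq (Lrel S) (connected S e)); auto.
  - intros; apply Lsym; auto.
  - intros; eapply Ltrans; eauto.
  - intros x Hx. apply filter_In in Hx. apply Hconn; tauto.
  - apply NoDup_FOP. apply NoDup_filter; auto.
    intros a b Ha Hb Hab Rab. apply filter_In in Ha as [Ha Ea]. apply filter_In in Hb as [Hb Eb].
    unfold LRb in *. destruct (dec (rootL a = a)) as [Ea'|]; [|discriminate].
    destruct (dec (rootL b = b)) as [Eb'|]; [|discriminate].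
    apply Hab. rewrite <- Ea', <- Eb'. apply rootL_eq; auto.
  - intros x Hx. apply Hconn in Hx. destruct (rootL_spec x Hx) as [H1 H2].
    exists (rootL x). split; auto. apply filter_In. split; auto. unfold LRb.
    destruct (dec _) as [|n]; auto. exfalso; apply n, rootL_root; auto.
Qed.

Lemma main_sec m n : num_classes (Rrel S) (connected S e) m -> num_classes (Lrel S) (connected S e) n ->
  vertex_group_free_of_rank S e (length ord + 1 - (m + n)).
Proof.
  intros Hm Hn. replace (length ord + 1 - (m + n)) with (length NT). apply free_NT.
  rewrite <- (reps_R m Hm), <- (reps_L n Hn), <- count3. lia.
Qed.

End Main.


Lemma split_snoc {T} (l1 : list T) x l2 L b : l1 ++ x :: l2 = L ++ [b] ->
  (l2 = [] /\ x = b /\ l1 = L) \/ (exists l2', l2 = l2' ++ [b] /\ L = l1 ++ x :: l2').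
Proof.
  intros E. destruct l2 as [|c l2'] using rev_ind.
  - left. apply app_inj_tail in E. destruct E; auto.
  - right. clear IHl2'. exists l2'.
    replace (l1 ++ x :: l2' ++ [c]) with ((l1 ++ x :: l2') ++ [c]) in E by (rewrite <- app_assoc; reflexivity).
    apply app_inj_tail in E. destruct E; subst; auto.
Qed.

Lemma cross {T} (L : list T) p : forall a, In a L -> (exists y, In y p /\ ~ In y L) ->
  exists a' b l1 l2, a :: p = l1 ++ a' :: b :: l2 /\ In a' L /\ ~ In b L.
Proof.
  induction p as [|b p IH]; intros a Ha (y & Hy & Hn); [contradiction|].
  destruct (dec (In b L)) as [Hb|Hb].
  - destruct IH with b as (a' & b' & l1 & l2 & E & H1 & H2); auto.
    { destruct Hy as [->|Hy]; [contradiction|eauto]. }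
    exists a', b', (a :: l1), l2. rewrite E. auto.
  - exists a, b, [], p. auto.
Qed.

Lemma build (S : Semigroup) (e : S) (He : idem S e) : forall s,
  (forall L, NoDup L -> (forall x, In x L -> connected S e x) -> length L < s + 1 ->
     In e L -> exists y, connected S e y /\ ~ In y L) ->
  exists rest, length rest = s /\ NoDup (e :: rest) /\ (forall x, In x (e :: rest) -> connected S e x) /\
    (forall l1 x l2, e :: rest = l1 ++ x :: l2 -> l1 <> [] -> exists z, In z l1 /\ adj S z x).
Proof.
  induction s as [|s IH]; intros Hext.
  - exists []. refine (conj eq_refl (conj _ (conj _ _))).
    + repeat constructor; auto.
    + intros x [<-|[]]. exists [e]. split; [apply Epath_iff; repeat split; auto; discriminate|split; auto].
    + intros l1 x l2 E Hl. destruct l1 as [|a [|b l1]]; simpl in E; try congruence; inversion E.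
  - destruct IH as (rest & Hl & Hnd & Hc & Ha).
    { intros L H1 H2 H3 H4. apply Hext; auto; lia. }
    destruct (Hext (e :: rest)) as (y & Hy & Hn); auto. simpl; lia. left; auto.
    destruct Hy as (p & Hp & Hh & Ht).
    destruct p as [|a p]; [destruct Hp; congruence|]. simpl in Hh. inversion Hh; subst a.
    destruct (cross (e :: rest) p e) as (a' & b & l1 & l2 & E & Ha' & Hb); [left; auto| |].
    { assert (Hyp : In y (e :: p)).
      { apply in_rev. destruct (rev (e :: p)); simpl in Ht; [discriminate|]. inversion Ht; left; auto. }
      destruct Hyp as [<-|Hyp]; [exfalso; apply Hn; left; auto|]. exists y; auto. }
    assert (Hab : adj S a' b) by (rewrite E in Hp; eapply adj_in; eauto).
    assert (Hcb : connected S e b).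
    { exists (l1 ++ [a'; b]). rewrite E in Hp.
      replace (l1 ++ a' :: b :: l2) with ((l1 ++ [a']) ++ b :: l2) in Hp by (rewrite <- app_assoc; reflexivity).
      apply Epath_split in Hp. split; [|split].
      - replace (l1 ++ [a'; b]) with ((l1 ++ [a']) ++ [b]) by (rewrite <- app_assoc; reflexivity). tauto.
      - destruct l1; simpl in *; inversion E; auto.
      - replace (l1 ++ [a'; b]) with ((l1 ++ [a']) ++ [b]) by (rewrite <- app_assoc; reflexivity).
        rewrite rev_app_distr. reflexivity. }
    exists (rest ++ [b]). split; [rewrite length_app; simpl; lia|]. split; [|split].
    + change (e :: rest ++ [b]) with ((e :: rest) ++ [b]). apply NoDup_app; auto.
      * repeat constructor; auto.
      * intros x Hx [<-|[]]; contradiction.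
    + intros x Hx. change (e :: rest ++ [b]) with ((e :: rest) ++ [b]) in Hx.
      apply in_app_or in Hx. destruct Hx as [Hx|[<-|[]]]; auto.
    + intros k1 x k2 Ek Hk1. change (e :: rest ++ [b]) with ((e :: rest) ++ [b]) in Ek.
      symmetry in Ek. destruct (split_snoc k1 x k2 (e :: rest) b Ek) as [(_ & -> & ->)|(k2' & _ & Ek')].
      * exists a'. auto.
      * apply (Ha k1 x k2'); auto.
Qed.

Theorem mainTheorem6 (S : Semigroup) (HS : regular S) (e : S) (He : idem S e)
  (k m n : nat)
  (Hk : finite_card (connected S e) k)
  (Hm : num_classes (Rrel S) (connected S e) m)
  (Hn : num_classes (Lrel S) (connected S e) n) :
  vertex_group_free_of_rank S e (k + 1 - (m + n)).
Proof.
  destruct Hk as (C & HCnd & HC & HCl).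
  assert (HeC : connected S e e).
  { exists [e]. split; [apply Epath_iff; repeat split; auto; discriminate|split; auto]. }
  assert (Hk1 : 1 <= k).
  { apply HC in HeC. destruct C; [contradiction|]. simpl in HCl. lia. }
  destruct (build S e He (k - 1)) as (rest & Hl & Hnd & Hc & Ha).
  { intros L H1 H2 H3 H4. destruct (dec (exists y, connected S e y /\ ~ In y L)) as [Y|Y]; auto.
    exfalso. assert (incl C L).
    { intros y Hy. apply HC in Hy. destruct (dec (In y L)); auto. exfalso; apply Y; eauto. }
    assert (length C <= length L) by (apply NoDup_incl_length; auto). lia. }
  assert (Hconn : forall x, In x (e :: rest) <-> connected S e x).
  { intros x. split; auto. intros Hx. apply HC in Hx. revert x Hx.
    apply NoDup_length_incl; auto.
    - simpl. lia.
    - intros y Hy. apply HC. auto. }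
  assert (R := main_sec S e rest He Hnd Hconn Ha m n Hm Hn).
  simpl in R. replace (k + 1 - (m + n)) with (Datatypes.S (length rest) + 1 - (m + n)) by lia. exact R.
Qed.
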